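(* Let $\mathcal{L}$ be an abstract logic such that $\mathcal{L}^-_{\omega\omega}\leq\mathcal{L}$. If $\mathcal{L}$ has the compactness property and the weak isomorphism property, then $\mathcal{L}$ has the finite weak dependence property: for every vocabulary $\tau$ and every $\varphi\in\mathcal{L}(\tau)$ there is a finite $\tau_0\subseteq\tau$ such that for all $\tau$-structures $\mathfrak{A},\mathfrak{B}$, if $\mathfrak{A}\upharpoonright\tau_0\sim\mathfrak{B}\upharpoonright\tau_0$ then ($\mathfrak{A}\models\varphi$ iff $\mathfrak{B}\models\varphi$).
   Context: $\mathcal{L}^-_{\omega\omega}$ denotes first-order logic without identity. An abstract logic $\mathcal{L}$ assigns to each vocabulary $\tau$ a set of sentences $\mathcal{L}(\tau)$ and a satisfaction relation with $\tau$-structures, satisfying the basic closure properties of abstract logics in the sense of Barwise–Feferman (isomorphism, reduct/expansion, renaming, closure under Boolean connectives, etc.), with the atom property taken relative to $\mathcal{L}^-_{\omega\omega}$; relativization is not required. $\mathcal{L}\leq\mathcal{L}'$ means every $\mathcal{L}(\tau)$-sentence is equivalent to some $\mathcal{L}'(\tau)$-sentence, for every $\tau$. Compactness property: for every $\tau$ and $\Phi\subseteq\mathcal{L}(\tau)$, if every finite subset of $\Phi$ has a model then $\Phi$ has a model. A weak isomorphism between $\tau$-structures $\mathfrak{A},\mathfrak{B}$ is a relation $R\subseteq A\times B$ with domain $A$ and range $B$ such that whenever $a_iRb_i$ ($i\le n$): $P^{\mathfrak{A}}(\bar a)$ iff $P^{\mathfrak{B}}(\bar b)$ for each $n$-ary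 relation symbol $P$, $f^{\mathfrak{A}}(\bar a)\,R\,f^{\mathfrak{B}}(\bar b)$ for each $n$-ary function symbol $f$, and $c^{\mathfrak{A}}Rc^{\mathfrak{B}}$ for each constant $c$; $\mathfrak{A}\sim\mathfrak{B}$ means such $R$ exists. Weak isomorphism property: $\mathfrak{A}\sim\mathfrak{B}$ implies $\mathfrak{A}$ and $\mathfrak{B}$ satisfy the same $\mathcal{L}$-sentences. $\mathfrak{A}\upharpoonright\tau_0$ is the reduct to $\tau_0$. *)

(* Defs.v *)
From mathcomp Require Import all_boot.
From Stdlib Require Import List.
Import ListNotations.

Set Implicit Arguments.
Unset Strict Implicit.
Unset Printing Implicit Defensive.

Record vocab := Vocab {
  relsym : Type;
  rar : relsym -> nat;
  funsym : Type;
  far : funsym -> nat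
}.

(* tau-structures (non-empty domain). *)
Record structure (tau : vocab) := Structure {
  carrier :> Type;
  point : carrier;
  rel : forall r : relsym tau, ('I_(rar r) -> carrier) -> Prop;
  fn  : forall f : funsym tau, ('I_(far f) -> carrier) -> carrier
}.
Arguments point {tau} s.
Arguments rel {tau} s r _.
Arguments fn {tau} s f _.

Definition isomorphic (tau : vocab) (A B : structure tau) : Prop :=
  exists (h : A -> B) (g : B -> A),
    (forall a, g (h a) = a) /\ (forall b, h (g b) = b) /\
    (forall r (xs : 'I_(rar r) -> A), rel A r xs <-> rel B r (fun i => h (xs i))) /\
    (forall f (xs : 'I_(far f) -> A), h (fn A f xs) = fn B f (fun i => h (xs i))).

Definition weak_iso (tau : vocab) (A B : structure tau) (R : A -> B -> Prop) : Prop :=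
  (forall a : A, exists b : B, R a b) /\
  (forall b : B, exists a : A, R a b) /\
  (forall r (xs : 'I_(rar r) -> A) (ys : 'I_(rar r) -> B),
      (forall i, R (xs i) (ys i)) -> (rel A r xs <-> rel B r ys)) /\
  (forall f (xs : 'I_(far f) -> A) (ys : 'I_(far f) -> B),
      (forall i, R (xs i) (ys i)) -> R (fn A f xs) (fn B f ys)).

Definition weakly_isomorphic (tau : vocab) (A B : structure tau) : Prop :=
  exists R : A -> B -> Prop, weak_iso R.

Record vocab_emb (tau tau' : vocab) := VocabEmb {
  emb_rel : relsym tau -> relsym tau';
  emb_rel_ar : forall r, rar (emb_rel r) = rar r;
  emb_rel_inj : forall r1 r2, emb_rel r1 = emb_rel r2 -> r1 = r2;
  emb_fun : funsym tau -> funsym tau';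
  emb_fun_ar : forall f, far (emb_fun f) = far f;
  emb_fun_inj : forall f1 f2, emb_fun f1 = emb_fun f2 -> f1 = f2
}.

(* Pulling a tau'-structure back along an embedding tau -> tau'
   (reduct to the image, followed by renaming). *)
Definition pullback (tau tau' : vocab) (e : vocab_emb tau tau') (B : structure tau')
  : structure tau :=
  @Structure tau B (point B)
    (fun r xs => rel B (emb_rel e r) (fun i => xs (cast_ord (emb_rel_ar e r) i)))
    (fun f xs => fn B (emb_fun e f) (fun i => xs (cast_ord (emb_fun_ar e f) i))).

Definition subvoc (tau : vocab) (PR : relsym tau -> bool) (PF : funsym tau -> bool)
  : vocab :=
  @Vocab {r | PR r} (fun r => rar (proj1_sig r)) {f | PF f} (fun f => far (proj1_sig f)).

Lemma proj1_sig_bool_inj (T : Type) (P : T -> bool) (x y : {t | P t}) :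
  proj1_sig x = proj1_sig y -> x = y.
Proof.
case: x y => [x px] [y py] /= exy; subst y.
by rewrite (bool_irrelevance px py).
Qed.

Definition subvoc_emb (tau : vocab) (PR : relsym tau -> bool) (PF : funsym tau -> bool)
  : vocab_emb (subvoc PR PF) tau :=
  @VocabEmb (subvoc PR PF) tau (@proj1_sig _ _) (fun _ => erefl)
    (@proj1_sig_bool_inj _ _)
    (@proj1_sig _ _) (fun _ => erefl) (@proj1_sig_bool_inj _ _).

Definition reduct (tau : vocab) (PR : relsym tau -> bool) (PF : funsym tau -> bool)
  (A : structure tau) : structure (subvoc PR PF) :=
  pullback (subvoc_emb PR PF) A.

Definition finite_pred (T : Type) (P : T -> bool) : Prop :=
  exists l : list T, forall x, P x -> In x l.

(* First-order logic without identity, L^-_{omega omega}.              *)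
Inductive term (tau : vocab) : Type :=
| tvar : nat -> term tau
| tapp : forall f : funsym tau, ('I_(far f) -> term tau) -> term tau.
Arguments tvar {tau} n.

Inductive fo (tau : vocab) : Type :=
| fatom : forall r : relsym tau, ('I_(rar r) -> term tau) -> fo tau
| fneg : fo tau -> fo tau
| fand : fo tau -> fo tau -> fo tau
| fall : nat -> fo tau -> fo tau.

Fixpoint teval {tau : vocab} (A : structure tau) (s : nat -> A) (t : term tau) : A :=
  match t with
  | tvar n => s n
  | tapp f ts => fn A f (fun i => @teval tau A s (ts i))
  end.

Definition upd (X : Type) (s : nat -> X) (x : nat) (a : X) : nat -> X :=
  fun n => if n == x then a else s n.

Fixpoint fo_sat {tau : vocab} (A : structure tau) (s : nat -> A) (phi : fo tau) : Prop :=
  match phi with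
  | fatom r ts => rel A r (fun i => @teval tau A s (ts i))
  | fneg psi => ~ @fo_sat tau A s psi
  | fand p q => @fo_sat tau A s p /\ @fo_sat tau A s q
  | fall x psi => forall a : A, @fo_sat tau A (upd s x a) psi
  end.

Fixpoint tfree {tau : vocab} (x : nat) (t : term tau) : Prop :=
  match t with
  | tvar n => n = x
  | tapp f ts => exists i, @tfree tau x (ts i)
  end.

Fixpoint fo_free {tau : vocab} (x : nat) (phi : fo tau) : Prop :=
  match phi with
  | fatom r ts => exists i, tfree x (ts i)
  | fneg psi => @fo_free tau x psi
  | fand p q => @fo_free tau x p \/ @fo_free tau x q
  | fall y psi => y <> x /\ @fo_free tau x psi
  end.

Definition fo_sentence (tau : vocab) (phi : fo tau) : Prop := forall x, ~ fo_free x phi.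

(* Truth of a sentence (the assignment is irrelevant; we use the constant one). *)
Definition fo_models (tau : vocab) (A : structure tau) (phi : fo tau) : Prop :=
  @fo_sat tau A (fun _ => point A) phi.

Record logic := Logic {
  sent : vocab -> Type;
  sat : forall tau : vocab, structure tau -> sent tau -> Prop
}.
Arguments sat _ {tau} _ _.

(* Basic closure properties of an abstract logic (relativization not required;
   atom property relative to first-order logic without identity). *)
Definition is_abstract_logic (L : logic) : Prop :=
  (forall tau (A B : structure tau), isomorphic A B ->
     forall phi : sent L tau, sat L A phi <-> sat L B phi) /\
  (forall tau tau' (e : vocab_emb tau tau') (phi : sent L tau),
     exists psi : sent L tau', forall B : structure tau',
       sat L B psi <-> sat L (pullback e B) phi) /\
  (forall tau (phi : sent L tau), exists psi : sent L tau,
     forall A : structure tau, sat L A psi <-> ~ sat L A phi) /\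
  (forall tau (phi chi : sent L tau), exists psi : sent L tau,
     forall A : structure tau, sat L A psi <-> (sat L A phi /\ sat L A chi)) /\
  (forall tau (r : relsym tau) (ts : 'I_(rar r) -> term tau), fo_sentence (@fatom tau r ts) ->
     exists psi : sent L tau, forall A : structure tau,
       sat L A psi <-> fo_models A (@fatom tau r ts)).

Definition fo_minus_le (L : logic) : Prop :=
  forall tau (phi : fo tau), fo_sentence phi ->
    exists psi : sent L tau, forall A : structure tau, sat L A psi <-> fo_models A phi.

Definition compactness (L : logic) : Prop :=
  forall tau (Phi : sent L tau -> Prop),
    (forall l : list (sent L tau), (forall phi, In phi l -> Phi phi) ->
       exists A : structure tau, forall phi, In phi l -> sat L A phi) ->
    exists A : structure tau, forall phi, Phi phi -> sat L A phi.

Definition weak_iso_property (L : logic) : Prop :=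
  forall tau (A B : structure tau), weakly_isomorphic A B ->
    forall phi : sent L tau, sat L A phi <-> sat L B phi.

Definition finite_weak_dependence (L : logic) : Prop :=
  forall tau (phi : sent L tau),
    exists (PR : relsym tau -> bool) (PF : funsym tau -> bool),
      finite_pred PR /\ finite_pred PF /\
      forall A B : structure tau,
        weakly_isomorphic (reduct PR PF A) (reduct PR PF B) ->
        (sat L A phi <-> sat L B phi).

(* Main.v *)
Require Import Defs.
Set Warnings "-notation-overridden".
From mathcomp Require Import all_boot zify.
From Stdlib Require Import Classical ClassicalEpsilon FunctionalExtensionality.
Import Defs.
Set Warnings "-notation-overridden".
Set Implicit Arguments.
Unset Strict Implicit.

Definition relT (tau : vocab) := ((relsym tau + relsym tau) + unit)%type.
Definition rarT (tau : vocab) (s : relT tau) : nat :=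
  match s with inl (inl r) => rar r | inl (inr r) => rar r | inr _ => 2 end.
Definition funT (tau : vocab) := (funsym tau + funsym tau)%type.
Definition farT (tau : vocab) (s : funT tau) : nat :=
  match s with inl f => far f | inr f => far f end.
Definition Tv (tau : vocab) : vocab := @Vocab (relT tau) (@rarT tau) (funT tau) (@farT tau).

Lemma inj_ll tau (r1 r2 : relsym tau) :
  (inl (inl r1) : relsym (Tv tau)) = inl (inl r2) -> r1 = r2.
Proof. by case. Qed.
Lemma inj_lr tau (r1 r2 : relsym tau) :
  (inl (inr r1) : relsym (Tv tau)) = inl (inr r2) -> r1 = r2.
Proof. by case. Qed.
Lemma inj_fl tau (r1 r2 : funsym tau) :
  (inl r1 : funsym (Tv tau)) = inl r2 -> r1 = r2.
Proof. by case. Qed.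
Lemma inj_fr tau (r1 r2 : funsym tau) :
  (inr r1 : funsym (Tv tau)) = inr r2 -> r1 = r2.
Proof. by case. Qed.

Definition e1 tau : vocab_emb tau (Tv tau) :=
  @VocabEmb tau (Tv tau) (fun r => inl (inl r)) (fun _ => erefl) (@inj_ll tau)
    (fun f => inl f) (fun _ => erefl) (@inj_fl tau).
Definition e2 tau : vocab_emb tau (Tv tau) :=
  @VocabEmb tau (Tv tau) (fun r => inl (inr r)) (fun _ => erefl) (@inj_lr tau)
    (fun f => inr f) (fun _ => erefl) (@inj_fr tau).

Lemma pb_rel tau tau' (e : vocab_emb tau tau') (C : structure tau') r xs :
  rel (pullback e C) r xs <->
  rel C (emb_rel e r) (fun i => xs (cast_ord (emb_rel_ar e r) i)).
Proof. by []. Qed.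

Lemma e1_rel tau (C : structure (Tv tau)) (r : relsym tau) (xs : 'I_(rar r) -> C) :
  rel (pullback (e1 tau) C) r xs <-> rel C (inl (inl r) : relsym (Tv tau)) xs.
Proof.
rewrite /=. have -> // : (fun i => xs (cast_ord (erefl (rar r)) i)) = xs.
by apply: functional_extensionality => i; congr xs; apply: val_inj.
Qed.
Lemma e2_rel tau (C : structure (Tv tau)) (r : relsym tau) (xs : 'I_(rar r) -> C) :
  rel (pullback (e2 tau) C) r xs <-> rel C (inl (inr r) : relsym (Tv tau)) xs.
Proof.
rewrite /=. have -> // : (fun i => xs (cast_ord (erefl (rar r)) i)) = xs.
by apply: functional_extensionality => i; congr xs; apply: val_inj.
Qed.
Lemma e1_fn tau (C : structure (Tv tau)) (f : funsym tau) (xs : 'I_(far f) -> C) :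
  fn (pullback (e1 tau) C) f xs = fn C (inl f : funsym (Tv tau)) xs.
Proof.
rewrite /=. have -> // : (fun i => xs (cast_ord (erefl (far f)) i)) = xs.
by apply: functional_extensionality => i; congr xs; apply: val_inj.
Qed.
Lemma e2_fn tau (C : structure (Tv tau)) (f : funsym tau) (xs : 'I_(far f) -> C) :
  fn (pullback (e2 tau) C) f xs = fn C (inr f : funsym (Tv tau)) xs.
Proof.
rewrite /=. have -> // : (fun i => xs (cast_ord (erefl (far f)) i)) = xs.
by apply: functional_extensionality => i; congr xs; apply: val_inj.
Qed.

Lemma red_rel tau (PR : relsym tau -> bool) (PF : funsym tau -> bool) (A : structure tau) (r : relsym tau) (Hr : PR r)
  (xs : 'I_(rar r) -> A) :
  rel (reduct PR PF A) (exist _ r Hr) xs <-> rel A r xs.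
Proof.
rewrite /=. have -> // : (fun i => xs (cast_ord (erefl (rar r)) i)) = xs.
by apply: functional_extensionality => i; congr xs; apply: val_inj.
Qed.
Lemma red_fn tau (PR : relsym tau -> bool) (PF : funsym tau -> bool) (A : structure tau) (f : funsym tau) (Hf : PF f)
  (xs : 'I_(far f) -> A) :
  fn (reduct PR PF A) (exist _ f Hf) xs = fn A f xs.
Proof.
rewrite /=. have -> // : (fun i => xs (cast_ord (erefl (far f)) i)) = xs.
by apply: functional_extensionality => i; congr xs; apply: val_inj.
Qed.

Definition Esym tau : relsym (Tv tau) := inr tt.
Definition Eat tau (u v : term (Tv tau)) : fo (Tv tau) :=
  @fatom (Tv tau) (Esym tau) (fun j : 'I_2 => if val j == 0 then u else v).
Definition RelE tau (C : structure (Tv tau)) (p q : C) : Prop :=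
  rel C (Esym tau) (fun j : 'I_2 => if val j == 0 then p else q).
Arguments RelE {tau} C p q.

Lemma sat_Eat tau (C : structure (Tv tau)) (s : nat -> C) u v :
  fo_sat s (Eat u v) <-> RelE C (teval s u) (teval s v).
Proof.
rewrite /= /RelE.
have -> // : (fun j : 'I_2 => teval s (if val j == 0 then u else v)) =
  (fun j : 'I_2 => if val j == 0 then teval s u else teval s v).
by apply: functional_extensionality => j; case: ifP.
Qed.

Lemma free_Eat tau x (u v : term (Tv tau)) :
  fo_free x (Eat u v) -> tfree x u \/ tfree x v.
Proof. by case=> j; case: ifP => _; auto. Qed.

Definition fimp tau (a b : fo tau) := fneg (fand a (fneg b)).
Definition fiff tau (a b : fo tau) := fand (fimp a b) (fimp b a).

Lemma sat_fimp tau (C : structure tau) (s : nat -> C) a b :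
  fo_sat s (fimp a b) <-> (fo_sat s a -> fo_sat s b).
Proof. rewrite /=; split; [move=> H Ha; apply: NNPP => Hb; exact: H|tauto]. Qed.

Lemma sat_fiff tau (C : structure tau) (s : nat -> C) a b :
  fo_sat s (fiff a b) <-> (fo_sat s a <-> fo_sat s b).
Proof. rewrite /fiff. change (fo_sat s (fimp a b) /\ fo_sat s (fimp b a) <-> (fo_sat s a <-> fo_sat s b)). rewrite !sat_fimp; tauto. Qed.

Fixpoint fall_n tau (k : nat) (b : fo tau) : fo tau :=
  match k with 0 => b | k'.+1 => fall k' (fall_n k' b) end.

Lemma sat_fall_n_intro tau (C : structure tau) k b :
  (forall t : nat -> C, fo_sat t b) -> forall s : nat -> C, fo_sat s (fall_n k b).
Proof. move=> H; elim: k => [|k IH] s //=. Qed.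

Lemma sat_fall_n_elim tau (C : structure tau) k b (s : nat -> C) :
  fo_sat s (fall_n k b) -> forall t : nat -> C, fo_sat (fun j => if j < k then t j else s j) b.
Proof.
elim: k s => [|k IH] s /= H t.
  by have -> : (fun j => s j) = s by [].
have := IH _ (H (t k)) t.
have -> // : (fun j => if j < k then t j else upd s k (t k) j) =
  (fun j => if j < k.+1 then t j else s j).
apply: functional_extensionality => j; rewrite /upd ltnS.
by case: (ltngtP j k) => // ->.
Qed.

Lemma free_fall_n tau k (b : fo tau) x : fo_free x (fall_n k b) -> fo_free x b /\ k <= x.
Proof.
elim: k => [|k IH] //= [Hk /IH [Hb Hx]]; split => //.
by rewrite ltn_neqAle Hx andbT; apply/eqP.
Qed.

Fixpoint chain tau (n k : nat) (b : fo (Tv tau)) : fo (Tv tau) :=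
  match k with 0 => b | k'.+1 => fimp (Eat (tvar k') (tvar (n + k'))) (chain n k' b) end.

Lemma sat_chain tau (C : structure (Tv tau)) (s : nat -> C) n k b :
  fo_sat s (chain n k b) <->
  ((forall i, i < k -> RelE C (s i) (s (n + i))) -> fo_sat s b).
Proof.
elim: k => [|k IH] /=; first by split => // H; apply: H => i.
change (fo_sat s (fimp (Eat (tvar k) (tvar (n + k))) (chain n k b)) <->
  ((forall i, i < k.+1 -> RelE C (s i) (s (n + i))) -> fo_sat s b)).
rewrite sat_fimp sat_Eat IH /=; split.
- move=> H Hall; apply: H; [apply: Hall; lia | move=> i Hi; apply: Hall; lia].
- move=> H Hk Hall; apply: H => i Hi.
  case: (ltnP i k) => Hik; first exact: Hall.
  by have -> : i = k by lia.
Qed.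

Lemma free_chain tau n k (b : fo (Tv tau)) x :
  fo_free x (chain n k b) -> x < n + k \/ fo_free x b.
Proof.
elim: k => [|k IH] /=; first by right.
case=> [/free_Eat [] /= Hx | /IH [] ?]; try (left; lia); auto.
Qed.
Definition body_r tau (r : relsym tau) : fo (Tv tau) :=
  fiff (@fatom (Tv tau) (inl (inl r)) (fun i : 'I_(rar r) => tvar i))
       (@fatom (Tv tau) (inl (inr r)) (fun i : 'I_(rar r) => tvar (rar r + i))).
Definition Th_r tau (r : relsym tau) := fall_n (rar r + rar r) (chain (rar r) (rar r) (body_r r)).
Definition body_f tau (f : funsym tau) : fo (Tv tau) :=
  Eat (@tapp (Tv tau) (inl f) (fun i : 'I_(far f) => tvar i))
      (@tapp (Tv tau) (inr f) (fun i : 'I_(far f) => tvar (far f + i))).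
Definition Th_f tau (f : funsym tau) := fall_n (far f + far f) (chain (far f) (far f) (body_f f)).
Definition tot1 tau : fo (Tv tau) := fall 0 (fneg (fall 1 (fneg (Eat (tvar 0) (tvar 1))))).
Definition tot2 tau : fo (Tv tau) := fall 1 (fneg (fall 0 (fneg (Eat (tvar 0) (tvar 1))))).

Lemma Th_r_sent tau (r : relsym tau) : fo_sentence (Th_r r).
Proof.
move=> x /free_fall_n [/free_chain Hx Hle]; case: Hx => [|]; first lia.
case=> [[[i /= Hi]|[i /= Hi]]|[[i /= Hi]|[i /= Hi]]];
have Hlt' : @nat_of_ord (rar r) i < rar r := ltn_ord i; lia.
Qed.

Lemma Th_f_sent tau (f : funsym tau) : fo_sentence (Th_f f).
Proof.
move=> x /free_fall_n [/free_chain Hx Hle]; case: Hx => [|]; first lia.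
case/free_Eat => [[i /= Hi]|[i /= Hi]];
have Hlt' : @nat_of_ord (far f) i < far f := ltn_ord i; lia.
Qed.

Lemma tot1_sent tau : fo_sentence (tot1 tau).
Proof. by move=> x /= [H0 [H1 /free_Eat [] /= Hx]]; subst. Qed.
Lemma tot2_sent tau : fo_sentence (tot2 tau).
Proof. by move=> x /= [H0 [H1 /free_Eat [] /= Hx]]; subst. Qed.

Definition ext (C : Type) (c : C) n (f : 'I_n -> C) (k : nat) : C :=
  match (insub k : option 'I_n) with Some i => f i | None => c end.
Lemma ext_val (C : Type) (c : C) n (f : 'I_n -> C) (i : 'I_n) : ext c f i = f i.
Proof. by rewrite /ext valK. Qed.
Definition mk (C : Type) (c : C) n (xs ys : 'I_n -> C) (k : nat) : C :=
  if k < n then ext c xs k else ext c ys (k - n).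

Lemma mk_elim (C : Type) (c : C) n (xs ys : 'I_n -> C) :
  let t := fun j => if j < n + n then mk c xs ys j else c in
  (forall i : 'I_n, t i = xs i) /\ (forall i : 'I_n, t (n + i) = ys i).
Proof.
move=> t; split=> i; rewrite /t /mk.
  have -> : i < n + n by have := ltn_ord i; lia.
  by rewrite ltn_ord ext_val.
have -> : n + i < n + n by have := ltn_ord i; lia.
have -> : (n + i < n) = false by lia.
by rewrite addKn ext_val.
Qed.

Lemma Th_r_elim tau (C : structure (Tv tau)) (r : relsym tau) :
  fo_models C (Th_r r) -> forall xs ys : 'I_(rar r) -> C,
  (forall i, RelE C (xs i) (ys i)) ->
  (rel C (inl (inl r) : relsym (Tv tau)) xs <-> rel C (inl (inr r) : relsym (Tv tau)) ys).
Proof.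
move=> H xs ys Hxy.
have := sat_fall_n_elim H (mk (point C) xs ys).
have [H1 H2] := mk_elim (point C) xs ys.
set t := (fun j => if j < _ then _ else _) in H1 H2 *.
rewrite sat_chain sat_fiff => H3.
have /H3 : forall i, i < rar r -> RelE C (t i) (t (rar r + i)).
  move=> i Hi; have E1 : t i = xs (Ordinal Hi) := H1 (Ordinal Hi).
  have E2 : t (_ + i) = ys (Ordinal Hi) := H2 (Ordinal Hi).
  by rewrite E1 E2.
rewrite /=.
have -> : (fun i : 'I_(rar r) => t i) = xs by apply: functional_extensionality.
by have -> : (fun i : 'I_(rar r) => t (rar r + i)) = ys by apply: functional_extensionality.
Qed.

Lemma Th_f_elim tau (C : structure (Tv tau)) (f : funsym tau) :
  fo_models C (Th_f f) -> forall xs ys : 'I_(far f) -> C,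
  (forall i, RelE C (xs i) (ys i)) ->
  RelE C (fn C (inl f : funsym (Tv tau)) xs) (fn C (inr f : funsym (Tv tau)) ys).
Proof.
move=> H xs ys Hxy.
have := sat_fall_n_elim H (mk (point C) xs ys).
have [H1 H2] := mk_elim (point C) xs ys.
set t := (fun j => if j < _ then _ else _) in H1 H2 *.
rewrite sat_chain sat_Eat => H3.
have /H3 : forall i, i < far f -> RelE C (t i) (t (far f + i)).
  move=> i Hi; have E1 : t i = xs (Ordinal Hi) := H1 (Ordinal Hi).
  have E2 : t (_ + i) = ys (Ordinal Hi) := H2 (Ordinal Hi).
  by rewrite E1 E2.
rewrite /=.
have -> : (fun i : 'I_(far f) => t i) = xs by apply: functional_extensionality.
by have -> : (fun i : 'I_(far f) => t (far f + i)) = ys by apply: functional_extensionality.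
Qed.

Lemma tot1_elim tau (C : structure (Tv tau)) :
  fo_models C (tot1 tau) -> forall a : C, exists b, RelE C a b.
Proof.
move=> H a.
have H' : ~ forall b, ~ fo_sat (upd (upd (fun _ => point C) 0 a) 1 b) (Eat (tvar 0) (tvar 1)) := H a.
apply: NNPP => Hn; apply: H' => b.
by rewrite sat_Eat /=; move=> Hr; apply: Hn; exists b.
Qed.
Lemma tot2_elim tau (C : structure (Tv tau)) :
  fo_models C (tot2 tau) -> forall b : C, exists a, RelE C a b.
Proof.
move=> H b.
have H' : ~ forall a, ~ fo_sat (upd (upd (fun _ => point C) 1 b) 0 a) (Eat (tvar 0) (tvar 1)) := H b.
apply: NNPP => Hn; apply: H' => a.
by rewrite sat_Eat /=; move=> Hr; apply: Hn; exists a.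
Qed.
Definition Crel tau (A B : structure tau) (R0 : A -> B -> Prop) (s : relsym (Tv tau)) :
  ('I_(rarT s) -> (A * B)%type) -> Prop :=
  match s as s0 return ('I_(rarT s0) -> (A * B)%type) -> Prop with
  | inl (inl r) => fun xs => rel A r (fun i => (xs i).1)
  | inl (inr r) => fun xs => rel B r (fun i => (xs i).2)
  | inr _ => fun xs => R0 (xs ord0).1 (xs ord_max).2
  end.
Definition Cfn tau (A B : structure tau) (s : funsym (Tv tau)) :
  ('I_(farT s) -> (A * B)%type) -> (A * B)%type :=
  match s as s0 return ('I_(farT s0) -> (A * B)%type) -> (A * B)%type with
  | inl f => fun xs => (fn A f (fun i => (xs i).1), point B)
  | inr f => fun xs => (point A, fn B f (fun i => (xs i).2))
  end.
Definition Cstr tau (A B : structure tau) (R0 : A -> B -> Prop) : structure (Tv tau) :=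
  @Structure (Tv tau) (A * B)%type (point A, point B) (Crel R0) (@Cfn tau A B).

Lemma pb1_wi tau (A B : structure tau) (R0 : A -> B -> Prop) :
  weakly_isomorphic (pullback (e1 tau) (Cstr R0)) A.
Proof.
exists (fun (p : A * B) (a : A) => p.1 = a); split; [|split; [|split]].
- by move=> p; exists p.1.
- by move=> a; exists (a, point B).
- move=> r xs ys Hxy; rewrite e1_rel /=.
  by have -> : (fun i => (xs i).1) = ys by apply: functional_extensionality.
- move=> f xs ys Hxy; rewrite e1_fn /=.
  by have -> : (fun i => (xs i).1) = ys by apply: functional_extensionality.
Qed.

Lemma pb2_wi tau (A B : structure tau) (R0 : A -> B -> Prop) :
  weakly_isomorphic (pullback (e2 tau) (Cstr R0)) B.
Proof.
exists (fun (p : A * B) (b : B) => p.2 = b); split; [|split; [|split]].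
- by move=> p; exists p.2.
- by move=> b; exists (point A, b).
- move=> r xs ys Hxy; rewrite e2_rel /=.
  by have -> : (fun i => (xs i).2) = ys by apply: functional_extensionality.
- move=> f xs ys Hxy; rewrite e2_fn /=.
  by have -> : (fun i => (xs i).2) = ys by apply: functional_extensionality.
Qed.

Lemma C_Th_r tau (A B : structure tau) (R0 : A -> B -> Prop) (r : relsym tau) :
  (forall (xs : 'I_(rar r) -> A) (ys : 'I_(rar r) -> B),
     (forall i, R0 (xs i) (ys i)) -> (rel A r xs <-> rel B r ys)) ->
  fo_models (Cstr R0) (Th_r r).
Proof.
move=> H; rewrite /fo_models /Th_r; apply: sat_fall_n_intro => t.
rewrite sat_chain sat_fiff => Hall.
exact: (H (fun i => (t i).1) (fun i => (t (rar r + i)).2) (fun i => Hall i (ltn_ord i))).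
Qed.

Lemma C_Th_f tau (A B : structure tau) (R0 : A -> B -> Prop) (f : funsym tau) :
  (forall (xs : 'I_(far f) -> A) (ys : 'I_(far f) -> B),
     (forall i, R0 (xs i) (ys i)) -> R0 (fn A f xs) (fn B f ys)) ->
  fo_models (Cstr R0) (Th_f f).
Proof.
move=> H; rewrite /fo_models /Th_f; apply: sat_fall_n_intro => t.
rewrite sat_chain sat_Eat => Hall.
exact: (H (fun i => (t i).1) (fun i => (t (far f + i)).2) (fun i => Hall i (ltn_ord i))).
Qed.

Lemma C_tot1 tau (A B : structure tau) (R0 : A -> B -> Prop) :
  (forall a, exists b, R0 a b) -> fo_models (Cstr R0) (tot1 tau).
Proof.
move=> H p Hn; have [b Hb] := H p.1; apply: (Hn (point A, b)).
exact: Hb.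
Qed.
Lemma C_tot2 tau (A B : structure tau) (R0 : A -> B -> Prop) :
  (forall b, exists a, R0 a b) -> fo_models (Cstr R0) (tot2 tau).
Proof.
move=> H p Hn; have [a Ha] := H p.2; apply: (Hn (a, point B)).
exact: Ha.
Qed.

Definition pb (P : Prop) : bool := if excluded_middle_informative P then true else false.
Lemma pbP (P : Prop) : pb P -> P.
Proof. by rewrite /pb; case: excluded_middle_informative. Qed.
Lemma pbI (P : Prop) : P -> pb P.
Proof. by rewrite /pb; case: excluded_middle_informative. Qed.

Lemma list_pick (X Y : Type) (l : list X) (Q : X -> Y -> Prop) :
  exists ly : list Y, forall x, List.In x l -> (exists y, Q x y) ->
    exists y, List.In y ly /\ Q x y.
Proof.
elim: l => [|x l [ly Hly]]; first by exists nil.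
case: (classic (exists y, Q x y)) => [[y Hy]|Hn].
  exists (y :: ly) => x' [<-|Hin] Hex; first by exists y; split; [left|].
  by have [y' [? ?]] := Hly _ Hin Hex; exists y'; split; [right|].
by exists ly => x' [<-|Hin] Hex; [contradiction | exact: Hly].
Qed.

Unset Implicit Arguments.
Set Strict Implicit.

Theorem lemma5 (L : logic) (HL : is_abstract_logic L) (Hle : fo_minus_le L)
  (Hcomp : compactness L) (Hweak : weak_iso_property L) :
  finite_weak_dependence L.
Proof.
move=> tau phi.
case: HL => _ [Hren [Hneg [Hconj _]]].
have [psi1 Hpsi1] := Hren _ _ (e1 tau) phi.
have [psi2 Hpsi2] := Hren _ _ (e2 tau) phi.
have [chi Hchi] : exists chi : sent L (Tv tau), forall C,
    sat L C chi <-> ~ (sat L (pullback (e1 tau) C) phi <-> sat L (pullback (e2 tau) C) phi).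
  have [c1 Hc1] := Hconj _ psi1 psi2.
  have [n1 Hn1] := Hneg _ psi1. have [n2 Hn2] := Hneg _ psi2.
  have [c2 Hc2] := Hconj _ n1 n2.
  have [d1 Hd1] := Hneg _ c1. have [d2 Hd2] := Hneg _ c2.
  have [x Hx] := Hconj _ d1 d2.
  exists x => C; rewrite Hx Hd1 Hd2 Hc1 Hc2 Hn1 Hn2 Hpsi1 Hpsi2; tauto.
apply: NNPP => Hno.
have Hcex : forall PR PF, finite_pred PR -> finite_pred PF ->
    exists A B : structure tau, weakly_isomorphic (reduct PR PF A) (reduct PR PF B) /\
      ~ (sat L A phi <-> sat L B phi).
  move=> PR PF HR HF; apply: NNPP => H; apply: Hno; exists PR, PF; do 2 (split => //).
  by move=> A B Hw; apply: NNPP => Hn; apply: H; exists A, B.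
pose Qr (psi : sent L (Tv tau)) (r : relsym tau) :=
  forall C, sat L C psi <-> fo_models C (Th_r r).
pose Qf (psi : sent L (Tv tau)) (f : funsym tau) :=
  forall C, sat L C psi <-> fo_models C (Th_f f).
pose Phi (psi : sent L (Tv tau)) := psi = chi \/
  (forall C, sat L C psi <-> fo_models C (tot1 tau)) \/
  (forall C, sat L C psi <-> fo_models C (tot2 tau)) \/
  (exists r, Qr psi r) \/ (exists f, Qf psi f).
have [C HC] : exists C : structure (Tv tau), forall psi, Phi psi -> sat L C psi.
  apply: Hcomp => l Hl.
  have [lr Hlr] := list_pick l Qr.
  have [lf Hlf] := list_pick l Qf.
  pose PR r := pb (List.In r lr).
  pose PF f := pb (List.In f lf).
  have [A [B [[R0 HR0] Hab]]] := Hcex PR PF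
     (ex_intro _ lr (fun r (H : PR r) => pbP H)) (ex_intro _ lf (fun f (H : PF f) => pbP H)).
  case: HR0 => Htot1 [Htot2 [Hrel Hfn]].
  exists (@Cstr tau A B R0) => psi Hin.
  case: (Hl psi Hin) => [->|[H|[H|[[r H]|[f H]]]]].
  - rewrite Hchi (Hweak _ _ _ (@pb1_wi tau A B R0)) (Hweak _ _ _ (@pb2_wi tau A B R0)); exact: Hab.
  - by apply/H; apply: C_tot1.
  - by apply/H; apply: C_tot2.
  - have [r' [Hr' Hq]] := Hlr psi Hin (ex_intro _ r H).
    apply/Hq; apply: C_Th_r => xs ys Hxy.
    have Hr : PR r' := pbI Hr'.
    have := Hrel (exist _ r' Hr) xs ys Hxy.
    by rewrite !red_rel.
  - have [f' [Hf' Hq]] := Hlf psi Hin (ex_intro _ f H).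
    apply/Hq; apply: C_Th_f => xs ys Hxy.
    have Hf : PF f' := pbI Hf'.
    have := Hfn (exist _ f' Hf) xs ys Hxy.
    by rewrite !red_fn.
have := HC chi (or_introl erefl).
rewrite Hchi; apply; apply: Hweak.
exists (RelE C); split; [|split; [|split]].
- move=> a; have [psi Hpsi] := Hle _ _ (@tot1_sent tau).
  apply: tot1_elim; apply/Hpsi; apply: HC; right; left; exact: Hpsi.
- move=> b; have [psi Hpsi] := Hle _ _ (@tot2_sent tau).
  apply: tot2_elim; apply/Hpsi; apply: HC; right; right; left; exact: Hpsi.
- move=> r xs ys Hxy; rewrite e1_rel e2_rel.
  have [psi Hpsi] := Hle _ _ (@Th_r_sent tau r).
  apply: Th_r_elim => //; apply/Hpsi; apply: HC; do 3 right; left; exists r; exact: Hpsi.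
- move=> f xs ys Hxy; rewrite e1_fn e2_fn.
  have [psi Hpsi] := Hle _ _ (@Th_f_sent tau f).
  apply: Th_f_elim => //; apply/Hpsi; apply: HC; do 4 right; exists f; exact: Hpsi.
Qed.
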